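(* Let $F_{ij}$ ($0\le i\le m$, $0\le j\le n$) be a dual-convex $m\times n$ net in $I^3$ with faces $p_{kl}$ and metric dual $p^*_{kl}=(p^1_{kl},p^2_{kl},p^3_{kl})$, $0\le k<m$, $0\le l<n$. A collection $C_{kl}\in\mathbb{R}^3$ ($0\le k<m$, $0\le l<n$) is reciprocal-parallel to $F_{ij}$ if and only if $C_{kl}=(-c^2_{kl},c^1_{kl},h_{kl})$ for all $k,l$, where $c^*_{kl}=(c^1_{kl},c^2_{kl},c^3_{kl})$ is a collection of points, not all equal, Christoffel dual to $p^*_{kl}$, and the real numbers $h_{kl}$ satisfy, for all adjacent index pairs $(k,l),(k',l')$, $$h_{kl}-h_{k'l'}=(c^1_{kl}-c^1_{k'l'})\,p^2_{kl}-(c^2_{kl}-c^2_{k'l'})\,p^1_{kl}.$$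
   Context: $I^3$ is $\mathbb{R}^3$ with coordinates $(x,y,z)$; isotropic = parallel to the $z$-axis. Metric duality: non-isotropic plane $z=P^1x+P^2y-P^3$ $\leftrightarrow$ point $(P^1,P^2,P^3)$. An $m\times n$ net: points $F_{ij}$, $0\le i\le m,0\le j\le n$, with $F_{ij},F_{i+1,j},F_{i+1,j+1},F_{i,j+1}$ consecutive vertices of a convex planar quadrilateral (face $p_{ij}$) for all $0\le i<m,0\le j<n$. Boundary vertices: $i\in\{0,m\}$ or $j\in\{0,n\}$; consecutive faces around non-boundary $F_{ij}$: $p_{i-1,j-1},p_{i,j-1},p_{ij},p_{i-1,j}$. Convex 4-hedral angle with vertex $O$: union of rays from $O$ meeting a convex quadrilateral in a plane not through $O$; flat angles: rays through one side; admissible: isotropic line through $O$ meets its interior. Dual-convex: $m,n\ge2$ and at each non-boundary vertex the four consecutive face planes are planes of four consecutive flat angles of an admissible convex 4-hedral angle. The metric dual of a dual-convex net is the $(m-1)\times(n-1)$ net of points $p^*_{kl}$ dual to the face planes. A collection $C_{kl}$, $0\le k<m$, $0\le l<n$, not all equal, is reciprocal-parallel to $F_{ij}$ if $C_{i,j-1}C_{ij}\parallel F_{i+1,j}F_{ij}$ for all $0\le i<m,0<j<n$ and $C_{i-1,j}C_{ij}\parallel F_{i,j+1}F_{ij}$ for all $0<i<m,0\le j<n$. Index pairs are adjacent if they differ by $1$ in exactly one coordinate. Labeled quadrilaterals $ABCD$, $A'B'C'D'$ are dual if $AB\parallel A'B'$, $BC\parallel B'C'$, $CD\parallel C'D'$,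 $DA\parallel D'A'$, $AC\parallel B'D'$, $BD\parallel A'C'$; two collections indexed alike are Christoffel dual if corresponding faces (quadrilaterals on indices $(k,l),(k+1,l),(k+1,l+1),(k,l+1)$) are dual. *)

(* Defs.v *)
(* Points of I^3 = R^3 over an arbitrary real (ordered) field R. *)
From HB Require Import structures.
From mathcomp Require Import all_boot all_order all_algebra.
Set Implicit Arguments. Unset Strict Implicit. Unset Printing Implicit Defensive.
Import Order.TTheory GRing.Theory Num.Theory.
Local Open Scope ring_scope.

Section Defs.
Variable R : realFieldType.

Record pt := Pt { px : R; py : R; pz : R }.

Definition padd (u v : pt) : pt := Pt (px u + px v) (py u + py v) (pz u + pz v).
Definition psub (u v : pt) : pt := Pt (px u - px v) (py u - py v) (pz u - pz v).
Definition pscale (a : R) (u : pt) : pt := Pt (a * px u) (a * py u) (a * pz u).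
Definition cross (u v : pt) : pt :=
  Pt (py u * pz v - pz u * py v) (pz u * px v - px u * pz v) (px u * py v - py u * px v).
Definition dot (u v : pt) : R := px u * px v + py u * py v + pz u * pz v.
Definition pzero : pt := Pt 0 0 0.
(* isotropic direction *)
Definition e3 : pt := Pt 0 0 1.

(* the vectors u and v are parallel (linearly dependent; a zero vector is
   parallel to everything) *)
Definition parallel (u v : pt) : Prop := cross u v = pzero.
Definition seg_par (A B A' B' : pt) : Prop := parallel (psub B A) (psub B' A').

Definition collinear (A B C : pt) : Prop := parallel (psub B A) (psub C A).
Definition coplanar (A B C D : pt) : Prop :=
  dot (cross (psub B A) (psub C A)) (psub D A) = 0.

(* A, B, C, D are consecutive vertices of a (non-degenerate) convex planar
   quadrilateral: A, B, C are not collinear and the diagonals AC and BD meet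
   at a point interior to both of them. *)
Definition convex_quad (A B C D : pt) : Prop :=
  ~ collinear A B C /\
  exists s t : R, [/\ 0 < s < 1, 0 < t < 1 &
     padd A (pscale s (psub C A)) = padd B (pscale t (psub D B))].

Definition net (m n : nat) (F : nat -> nat -> pt) : Prop :=
  forall i j, (i < m)%N -> (j < n)%N ->
    convex_quad (F i j) (F i.+1 j) (F i.+1 j.+1) (F i j.+1).

(* the plane through the (non-collinear) points O, A, B is the plane of the
   face p_kl of the net F (i.e. contains its four vertices) *)
Definition plane_is_face (F : nat -> nat -> pt) (k l : nat) (O A B : pt) : Prop :=
  [/\ coplanar O A B (F k l), coplanar O A B (F k.+1 l),
      coplanar O A B (F k.+1 l.+1) & coplanar O A B (F k l.+1)].

(* At the vertex F_ij the four consecutive face planes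
   p_{i-1,j-1}, p_{i,j-1}, p_{ij}, p_{i-1,j} are the planes of four consecutive
   flat angles O Q1 Q2, O Q2 Q3, O Q3 Q4, O Q4 Q1 of an admissible convex
   4-hedral angle with vertex O (the rays from O through the convex
   quadrilateral Q1Q2Q3Q4 lying in a plane not through O). *)
Definition admissible_at (F : nat -> nat -> pt) (i j : nat) : Prop :=
  exists O Q1 Q2 Q3 Q4 : pt,
    [/\ convex_quad Q1 Q2 Q3 Q4, ~ coplanar Q1 Q2 Q3 O,
        [/\ plane_is_face F i.-1 j.-1 O Q1 Q2, plane_is_face F i j.-1 O Q2 Q3,
            plane_is_face F i j O Q3 Q4 & plane_is_face F i.-1 j O Q4 Q1] &
        (* admissibility: the isotropic line through O meets the interior
           of the angle, i.e. some point O + t (q - O), t > 0, q in the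
           interior of Q1Q2Q3Q4, lies on the line O + s e3 *)
        exists (s t a1 a2 a3 a4 : R),
          [/\ 0 < t, [/\ 0 < a1, 0 < a2, 0 < a3 & 0 < a4], a1 + a2 + a3 + a4 = 1 &
              padd O (pscale s e3) =
              padd O (pscale t (psub (padd (padd (pscale a1 Q1) (pscale a2 Q2))
                                      (padd (pscale a3 Q3) (pscale a4 Q4))) O))]].

Definition dual_convex (m n : nat) (F : nat -> nat -> pt) : Prop :=
  [/\ net m n F, (2 <= m)%N, (2 <= n)%N &
      forall i j, (0 < i < m)%N -> (0 < j < n)%N -> admissible_at F i j].

(* the point P = (P1,P2,P3) is metric dual to the non-isotropic plane
   z = P1 x + P2 y - P3; X lies on that plane *)
Definition on_dual_plane (P X : pt) : Prop :=
  pz X = px P * px X + py P * py X - pz P.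

Definition metric_dual (m n : nat) (F : nat -> nat -> pt) (p : nat -> nat -> pt) : Prop :=
  forall k l, (k < m)%N -> (l < n)%N ->
    [/\ on_dual_plane (p k l) (F k l), on_dual_plane (p k l) (F k.+1 l),
        on_dual_plane (p k l) (F k.+1 l.+1) & on_dual_plane (p k l) (F k l.+1)].

Definition not_all_equal (m n : nat) (C : nat -> nat -> pt) : Prop :=
  exists k l k' l', [/\ (k < m)%N, (l < n)%N, (k' < m)%N, (l' < n)%N &
                        C k l <> C k' l'].

Definition reciprocal_parallel (m n : nat) (F C : nat -> nat -> pt) : Prop :=
  [/\ not_all_equal m n C,
      (forall i j, (i < m)%N -> (0 < j < n)%N ->
         seg_par (C i j.-1) (C i j) (F i.+1 j) (F i j)) &
      (forall i j, (0 < i < m)%N -> (j < n)%N ->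
         seg_par (C i.-1 j) (C i j) (F i j.+1) (F i j))].

Definition dual_quads (A B C D A' B' C' D' : pt) : Prop :=
  [/\ seg_par A B A' B', seg_par B C B' C', seg_par C D C' D',
      seg_par D A D' A' & seg_par A C B' D' /\ seg_par B D A' C'].

Definition christoffel_dual (m n : nat) (P Q : nat -> nat -> pt) : Prop :=
  forall k l, (k.+1 < m)%N -> (l.+1 < n)%N ->
    dual_quads (P k l) (P k.+1 l) (P k.+1 l.+1) (P k l.+1)
               (Q k l) (Q k.+1 l) (Q k.+1 l.+1) (Q k l.+1).

Definition adjacent (m n k l k' l' : nat) : Prop :=
  [/\ (k < m)%N, (l < n)%N, (k' < m)%N, (l' < n)%N &
      (k == k' /\ (l' == l.+1 \/ l == l'.+1)) \/
      (l == l' /\ (k' == k.+1 \/ k == k'.+1))].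

End Defs.

(* Main.v *)
Require Import Defs.
From HB Require Import structures.
From mathcomp Require Import all_boot all_order all_algebra.
From mathcomp Require Import ring lra.
From Stdlib Require Import Classical.
Import Order.TTheory GRing.Theory Num.Theory.
Set Implicit Arguments. Unset Strict Implicit. Unset Printing Implicit Defensive.
Local Open Scope ring_scope.

Section Alg.
Variable R : realFieldType.
Implicit Types u v w a b c e N : pt R.

Lemma pt_eta u : u = Pt (px u) (py u) (pz u).
Proof. by case: u. Qed.

Lemma parallelP u w : parallel u w <->
  [/\ py u * pz w - pz u * py w = 0, pz u * px w - px u * pz w = 0
    & px u * py w - py u * px w = 0].
Proof.
rewrite /parallel /cross /pzero; split; first by case=> -> -> ->.
by case=> -> -> ->.
Qed.

Lemma psub0 a b : psub a b = pzero R -> a = b.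
Proof.
case: a b => a1 a2 a3 [b1 b2 b3]; rewrite /psub /pzero /=.
by case=> /eqP; rewrite subr_eq0 => /eqP -> /eqP; rewrite subr_eq0 => /eqP ->
  /eqP; rewrite subr_eq0 => /eqP ->.
Qed.

Lemma pt0 u : px u = 0 -> py u = 0 -> pz u = 0 -> u = pzero R.
Proof. by case: u => /= ? ? ? -> -> ->. Qed.

Lemma par_sym u w : parallel u w -> parallel w u.
Proof. move/parallelP=> [h1 h2 h3]; apply/parallelP; split; lra. Qed.

Lemma par_neg2 a b c d : parallel (psub a b) (psub c d) -> parallel (psub b a) (psub d c).
Proof.
move/parallelP=> [h1 h2 h3]; apply/parallelP; rewrite /psub /= in h1 h2 h3 *; split; lra.
Qed.

Lemma ncol_neq (A B C : pt R) : ~ collinear A B C -> A <> B /\ B <> C.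
Proof.
rewrite /collinear /parallel => h; split=> E; apply: h; rewrite E.
  by case: B C {E} => ? ? ? [? ? ?]; rewrite /cross /psub /pzero /=; congr Pt; ring.
by case: A C {E} => ? ? ? [? ? ?]; rewrite /cross /psub /pzero /=; congr Pt; ring.
Qed.

Lemma par_trans a b c : parallel a c -> parallel b c -> c <> pzero R -> parallel a b.
Proof.
case: a b c => a1 a2 a3 [b1 b2 b3] [c1 c2 c3].
move/parallelP=> /= [ha1 ha2 ha3] /parallelP /= [hb1 hb2 hb3] hc.
apply/parallelP => /=.
have sol : forall x y z : R, z != 0 -> x * z = y -> x = y / z.
  by move=> x y z hz <-; rewrite mulfK.
case: (eqVneq c1 0) => [e1|n1].
  case: (eqVneq c2 0) => [e2|n2].
    case: (eqVneq c3 0) => [e3|n3]; first by case: hc; rewrite e1 e2 e3.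
    have Ea1 : a1 = a3 * c1 / c3 by apply: sol => //; lra.
    have Ea2 : a2 = a3 * c2 / c3 by apply: sol => //; lra.
    have Eb1 : b1 = b3 * c1 / c3 by apply: sol => //; lra.
    have Eb2 : b2 = b3 * c2 / c3 by apply: sol => //; lra.
    by rewrite Ea1 Ea2 Eb1 Eb2; split; field.
  have Ea1 : a1 = a2 * c1 / c2 by apply: sol => //; lra.
  have Ea3 : a3 = a2 * c3 / c2 by apply: sol => //; lra.
  have Eb1 : b1 = b2 * c1 / c2 by apply: sol => //; lra.
  have Eb3 : b3 = b2 * c3 / c2 by apply: sol => //; lra.
  by rewrite Ea1 Ea3 Eb1 Eb3; split; field.
have Ea2 : a2 = a1 * c2 / c1 by apply: sol => //; lra.
have Ea3 : a3 = a1 * c3 / c1 by apply: sol => //; lra.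
have Eb2 : b2 = b1 * c2 / c1 by apply: sol => //; lra.
have Eb3 : b3 = b1 * c3 / c1 by apply: sol => //; lra.
by rewrite Ea2 Ea3 Eb2 Eb3; split; field.
Qed.

Lemma cross_zero_det a b c :
  cross (cross a b) (cross b c) = pzero R -> dot (cross a b) c = 0.
Proof.
move=> H.
have : dot (cross (cross a b) (cross b c)) (cross c a) = (dot (cross a b) c) ^+ 2.
  by case: a b c {H} => ? ? ? [? ? ?] [? ? ?]; rewrite /dot /cross /=; ring.
rewrite H /dot /pzero /= !mul0r !addr0 => /esym /eqP.
by rewrite sqrf_eq0 => /eqP.
Qed.

Lemma normal_par N nn v w : dot N v = 0 -> dot N w = 0 -> dot nn v = 0 ->
  dot nn w = 0 -> cross v w <> pzero R -> parallel N nn.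
Proof.
move=> h1 h2 h3 h4 hvw; apply: (@par_trans _ _ (cross v w)) => //.
  rewrite /parallel.
  have -> : cross N (cross v w) = Pt (px v * dot N w - px w * dot N v)
     (py v * dot N w - py w * dot N v) (pz v * dot N w - pz w * dot N v).
    by case: N v w {h1 h2 h3 h4 hvw} => ? ? ? [? ? ?] [? ? ?]; rewrite /dot /cross /=; congr Pt; ring.
  by rewrite h1 h2 /pzero !mulr0 subrr.
rewrite /parallel.
have -> : cross nn (cross v w) = Pt (px v * dot nn w - px w * dot nn v)
   (py v * dot nn w - py w * dot nn v) (pz v * dot nn w - pz w * dot nn v).
  by case: nn v w {h1 h2 h3 h4 hvw} => ? ? ? [? ? ?] [? ? ?]; rewrite /dot /cross /=; congr Pt; ring.
by rewrite h3 h4 /pzero !mulr0 subrr.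
Qed.

Lemma lift_par u w (v1 v2 : R) : pz u = px u * v1 + py u * v2 -> pz w = px w * v1 + py w * v2 ->
  px u * py w - py u * px w = 0 -> parallel u w.
Proof.
move=> hu hw hz; apply/parallelP; rewrite hu hw; split => //.
  by transitivity (- v1 * (px u * py w - py u * px w)); [ring | rewrite hz mulr0].
by transitivity (- v2 * (px u * py w - py u * px w)); [ring | rewrite hz mulr0].
Qed.

Lemma edge_fwd u e (gx gy : R) : parallel u e -> e <> pzero R ->
  pz e = gx * px e + gy * py e -> pz u = gx * px u + gy * py u.
Proof.
move/parallelP=> [h1 h2 h3] he hg.
set d := pz u - (gx * px u + gy * py u).
have dx : d * px e = 0.
  transitivity ((pz u * px e - px u * pz e) + px u * (pz e - (gx * px e + gy * py e))
     + gy * (px u * py e - py u * px e)); first by rewrite /d; ring.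
  by rewrite h2 h3 hg subrr !mulr0 !addr0.
have dy : d * py e = 0.
  transitivity (- (py u * pz e - pz u * py e) + py u * (pz e - (gx * px e + gy * py e))
     - gx * (px u * py e - py u * px e)); first by rewrite /d; ring.
  by rewrite h1 h3 hg subrr !mulr0 oppr0 !addr0 ?subr0.
suff : d = 0 by move/eqP; rewrite subr_eq0 => /eqP.
case: (eqVneq (px e) 0) => [ex|ex]; last by move/eqP: dx; rewrite mulf_eq0 (negbTE ex) orbF => /eqP.
case: (eqVneq (py e) 0) => [ey|ey]; last by move/eqP: dy; rewrite mulf_eq0 (negbTE ey) orbF => /eqP.
by case: he; apply: pt0 => //; rewrite hg ex ey !mulr0 addr0.
Qed.

Lemma edge_back dc dp e (gx gy dh : R) : parallel dc dp -> ~ (px dp = 0 /\ py dp = 0) ->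
  px dp * px e + py dp * py e = 0 -> pz e = gx * px e + gy * py e ->
  dh = px dc * gy - py dc * gx -> parallel (Pt (- py dc) (px dc) dh) e.
Proof.
move/parallelP=> [_ _ hz] hdp hde hg hdh.
set s := px dc * px e + py dc * py e.
have s1 : s * px dp = 0.
  transitivity (px dc * (px dp * px e + py dp * py e) - py e * (px dc * py dp - py dc * px dp));
    first by rewrite /s; ring.
  by rewrite hde hz !mulr0 subr0.
have s2 : s * py dp = 0.
  transitivity (py dc * (px dp * px e + py dp * py e) + px e * (px dc * py dp - py dc * px dp));
    first by rewrite /s; ring.
  by rewrite hde hz !mulr0 addr0.
have s0 : s = 0.
  case: (eqVneq (px dp) 0) => [ex|ex]; last by move/eqP: s1; rewrite mulf_eq0 (negbTE ex) orbF => /eqP.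
  case: (eqVneq (py dp) 0) => [ey|ey]; last by move/eqP: s2; rewrite mulf_eq0 (negbTE ey) orbF => /eqP.
  by case: hdp.
apply/parallelP; rewrite /= hg hdh; split.
- by transitivity (gx * s); [rewrite /s; ring | rewrite s0 mulr0].
- by transitivity (gy * s); [rewrite /s; ring | rewrite s0 mulr0].
- by transitivity (- s); [rewrite /s; ring | rewrite s0 oppr0].
Qed.

Definition Wv (s t : R) a b c := Pt ((1-s)*px a - (1-t)*px b + s*px c)
  ((1-s)*py a - (1-t)*py b + s*py c) ((1-s)*pz a - (1-t)*pz b + s*pz c).

Lemma id2 s t a b c : dot (cross b c) (Wv s t a b c) = (1-s) * dot (cross a b) c.
Proof. by case: a b c => ? ? ? [? ? ?] [? ? ?]; rewrite /dot /cross /Wv /=; ring. Qed.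
Lemma id3 s t a b c : dot (cross a c) (Wv s t a b c) = (1-t) * dot (cross a b) c.
Proof. by case: a b c => ? ? ? [? ? ?] [? ? ?]; rewrite /dot /cross /Wv /=; ring. Qed.
Lemma id4 s t a b c : dot (cross a b) (Wv s t a b c) = s * dot (cross a b) c.
Proof. by case: a b c => ? ? ? [? ? ?] [? ? ?]; rewrite /dot /cross /Wv /=; ring. Qed.
Lemma cyc a b c : dot (cross a b) c = dot (cross c a) b.
Proof. by case: a b c => ? ? ? [? ? ?] [? ? ?]; rewrite /dot /cross /=; ring. Qed.
Lemma dot_sub N (X Y O : pt R) : dot N (psub X Y) = dot N (psub X O) - dot N (psub Y O).
Proof. by case: N X Y O => ? ? ? [? ? ?] [? ? ?] [? ? ?]; rewrite /dot /psub /=; ring. Qed.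
Lemma coplT (Q1 Q2 Q3 O : pt R) : dot (cross (psub Q2 Q1) (psub Q3 Q1)) (psub O Q1) =
  - dot (cross (psub Q1 O) (psub Q2 O)) (psub Q3 O).
Proof. by case: Q1 Q2 Q3 O => ? ? ? [? ? ?] [? ? ?] [? ? ?]; rewrite /dot /cross /psub /=; ring. Qed.

Lemma on_plane_diff (q X Y : pt R) : on_dual_plane q X -> on_dual_plane q Y ->
  pz (psub X Y) = px q * px (psub X Y) + py q * py (psub X Y).
Proof. rewrite /on_dual_plane /psub /= => hX hY; lra. Qed.

Lemma hW_lem (Q1 Q2 Q3 Q4 O : pt R) (s t : R) N :
  padd Q1 (pscale s (psub Q3 Q1)) = padd Q2 (pscale t (psub Q4 Q2)) ->
  t * dot N (psub Q4 O) = dot N (Wv s t (psub Q1 O) (psub Q2 O) (psub Q3 O)).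
Proof.
case: Q1 Q2 Q3 Q4 O N => x1 y1 z1 [x2 y2 z2] [x3 y3 z3] [x4 y4 z4] [o1 o2 o3] [n1 n2 n3].
rewrite /padd /pscale /psub /dot /Wv /= => -[e1 e2 e3].
have -> : t * (n1 * (x4 - o1) + n2 * (y4 - o2) + n3 * (z4 - o3)) =
  n1 * (t * (x4 - o1)) + n2 * (t * (y4 - o2)) + n3 * (t * (z4 - o3)) by ring.
have -> : t * (x4 - o1) = (1 - s) * (x1 - o1) - (1 - t) * (x2 - o1) + s * (x3 - o1) by lra.
have -> : t * (y4 - o2) = (1 - s) * (y1 - o2) - (1 - t) * (y2 - o2) + s * (y3 - o2) by lra.
have -> : t * (z4 - o3) = (1 - s) * (z1 - o3) - (1 - t) * (z2 - o3) + s * (z3 - o3) by lra.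
by [].
Qed.

Definition Mf (u : pt R) (v1 v2 : R) := py u * v1 - px u * v2.

Lemma move_M u (P Q : pt R) : parallel u (psub P Q) -> Mf u (px P) (py P) = Mf u (px Q) (py Q).
Proof. move/parallelP=> [_ _]; rewrite /Mf /psub /= => h; lra. Qed.

Lemma par_vert (dc dp : pt R) : parallel dc dp -> px dc = 0 -> py dc = 0 ->
  ~ (px dp = 0 /\ py dp = 0) -> pz dc = 0.
Proof.
move/parallelP=> [h1 h2 _] hx hy hd.
rewrite hx hy in h1 h2.
case: (eqVneq (px dp) 0) => [ex|ex].
  case: (eqVneq (py dp) 0) => [ey|ey]; first by case: hd.
  by move/eqP: h1; rewrite mul0r sub0r oppr_eq0 mulf_eq0 (negbTE ey) orbF => /eqP.
by move/eqP: h2; rewrite mul0r subr0 mulf_eq0 (negbTE ex) orbF => /eqP.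
Qed.

Lemma quad_alg (PA PB PC PD CA CB CC CD : pt R) (zA zB zC zD v1 v2 v3 : R) :
  pz PA = px PA * v1 + py PA * v2 - v3 -> pz PB = px PB * v1 + py PB * v2 - v3 ->
  pz PC = px PC * v1 + py PC * v2 - v3 -> pz PD = px PD * v1 + py PD * v2 - v3 ->
  zB = zA + Mf (psub CB CA) v1 v2 -> zD = zA + Mf (psub CD CA) v1 v2 ->
  zC = zB + Mf (psub CC CB) v1 v2 ->
  pz (psub CB CA) = px PA * px (psub CB CA) + py PA * py (psub CB CA) ->
  pz (psub CB CA) = px PB * px (psub CB CA) + py PB * py (psub CB CA) ->
  pz (psub CD CA) = px PA * px (psub CD CA) + py PA * py (psub CD CA) ->
  pz (psub CD CA) = px PD * px (psub CD CA) + py PD * py (psub CD CA) ->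
  pz (psub CC CB) = px PB * px (psub CC CB) + py PB * py (psub CC CB) ->
  pz (psub CC CB) = px PC * px (psub CC CB) + py PC * py (psub CC CB) ->
  pz (psub CC CD) = px PD * px (psub CC CD) + py PD * py (psub CC CD) ->
  pz (psub CC CD) = px PC * px (psub CC CD) + py PC * py (psub CC CD) ->
  dual_quads PA PB PC PD (Pt (py CA) (- px CA) zA) (Pt (py CB) (- px CB) zB)
    (Pt (py CC) (- px CC) zC) (Pt (py CD) (- px CD) zD).
Proof.
rewrite /Mf /psub /= => hA hB hC hD zb zd zc e1 e2 e3 e4 e5 e6 e7 e8.
rewrite /dual_quads /seg_par; split; [| | | | split]. all: apply: (@lift_par _ _ v1 v2); rewrite /=; lra.
Qed.

End Alg.

Lemma grid_const (T : Type) (m n : nat) (f : nat -> nat -> T) :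
  (forall k l, (k.+1 < m)%N -> (l < n)%N -> f k.+1 l = f k l) ->
  (forall k l, (k < m)%N -> (l.+1 < n)%N -> f k l.+1 = f k l) ->
  forall k l, (k < m)%N -> (l < n)%N -> f k l = f 0%N 0%N.
Proof.
move=> H1 H2; elim=> [|k IH] l hk hl.
  elim: l hl => [|l IHl] hl //.
  by rewrite H2 // IHl // ltnW.
by rewrite H1 // IH // ltnW.
Qed.


Section Geo.
Variable R : realFieldType.
Variables (m n : nat) (F p : nat -> nat -> pt R).
Hypothesis hn : net m n F.
Hypothesis hp : metric_dual m n F p.

Definition nv (q : pt R) := Pt (px q) (py q) (-1).

Lemma face_normal k l (O A B : pt R) : (k < m)%N -> (l < n)%N ->
  plane_is_face F k l O A B ->
  parallel (cross (psub A O) (psub B O)) (nv (p k l)).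
Proof.
move=> hk hl [c1 c2 c3 c4].
have [ncol _] := hn hk hl.
have [o1 o2 o3 o4] := hp hk hl.
have hd : forall X, on_dual_plane (p k l) X -> dot (nv (p k l)) (psub X (F k l)) = 0.
  move=> X; move: o1; rewrite /on_dual_plane /nv /dot /psub /= => h1 h2; lra.
apply: (@normal_par _ _ _ (psub (F k.+1 l) (F k l)) (psub (F k.+1 l.+1) (F k l))).
- by rewrite (@dot_sub _ _ _ _ O) c2 c1 subrr.
- by rewrite (@dot_sub _ _ _ _ O) c3 c1 subrr.
- exact: hd.
- exact: hd.
- exact: ncol.
Qed.

Definition G a b := (px (p a b), py (p a b)).

Lemma vertex_g i j : (0 < i < m)%N -> (0 < j < n)%N -> admissible_at F i j ->
  [/\ G i.-1 j.-1 <> G i j.-1, G i j.-1 <> G i j, G i j <> G i.-1 j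
    & G i.-1 j <> G i.-1 j.-1].
Proof.
move=> /andP[i0 im] /andP[j0 jn] [O [Q1 [Q2 [Q3 [Q4 [cq ncop [f1 f2 f3 f4] _]]]]]].
have im' : (i.-1 < m)%N by rewrite (leq_ltn_trans (leq_pred i)).
have jn' : (j.-1 < n)%N by rewrite (leq_ltn_trans (leq_pred j)).
have n1 := face_normal im' jn' f1.
have n2 := face_normal im jn' f2.
have n3 := face_normal im jn f3.
have n4 := face_normal im' jn f4.
set u1 := psub Q1 O in n1 n4; set u2 := psub Q2 O in n1 n2;
set u3 := psub Q3 O in n2 n3; set u4 := psub Q4 O in n3 n4.
set T := dot (cross u1 u2) u3.
have T0 : T != 0.
  apply/eqP => T0; apply: ncop; rewrite /coplanar coplT -/u1 -/u2 -/u3 -/T T0; exact: oppr0.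
case: cq => _ [s [t [/andP[s0 s1] /andP[t0 t1] eq]]].
have hW : forall N, t * dot N u4 = dot N (Wv s t u1 u2 u3).
  by move=> N; apply: hW_lem.
have pairc : forall (a b c d : nat) (x y z : pt R), G a b = G c d ->
    parallel (cross x y) (nv (p a b)) -> parallel (cross y z) (nv (p c d)) ->
    dot (cross x y) z = 0.
  move=> a b c d x y z hG h1 h2; apply: cross_zero_det.
  apply: (@par_trans _ _ _ (nv (p a b))) => //.
    by rewrite /nv; case: hG => -> ->.
  by rewrite /nv /pzero => -[_ _ /eqP]; rewrite oppr_eq0 oner_eq0.
have nz : forall k : R, k != 0 -> k * T = 0 -> False.
  by move=> k hk /eqP; rewrite mulf_eq0 (negbTE hk) (negbTE T0).
split => hG.
- by move: (pairc _ _ _ _ _ _ _ hG n1 n2); apply/eqP.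
- have := pairc _ _ _ _ _ _ _ hG n2 n3 => h.
  apply: (nz (1 - s)); first by rewrite subr_eq0 eq_sym lt_eqF.
  by rewrite /T -(@id2 _ s t) -hW h mulr0.
- have := pairc _ _ _ _ _ _ _ hG n3 n4 => h.
  apply: (nz (1 - t)); first by rewrite subr_eq0 eq_sym lt_eqF.
  by rewrite /T -(@id3 _ s t) -hW -cyc h mulr0.
- have := pairc _ _ _ _ _ _ _ hG n4 n1 => h.
  apply: (nz s); first by rewrite gt_eqF.
  by rewrite /T -(@id4 _ s t) -hW cyc h mulr0.
Qed.

End Geo.

Section Main.
Variable R : realFieldType.
Variables (m n : nat) (F p : nat -> nat -> pt R).
Hypothesis hF : dual_convex m n F.
Hypothesis hp : metric_dual m n F p.

Let hn : net m n F. Proof. by case: hF. Qed.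
Let m2 : (2 <= m)%N. Proof. by case: hF. Qed.
Let n2 : (2 <= n)%N. Proof. by case: hF. Qed.
Let hadm : forall i j, (0 < i < m)%N -> (0 < j < n)%N -> admissible_at F i j.
Proof. by case: hF. Qed.

Definition el k l := psub (F k l.+1) (F k.+1 l.+1).
Definition ek k l := psub (F k.+1 l) (F k.+1 l.+1).

Lemma gdiff_l k l : (k < m)%N -> (l.+1 < n)%N -> G p k l <> G p k l.+1.
Proof.
move=> hk hl; case: k hk => [|k] hk.
  have m2' : (0 < 1 < m)%N by [].
  have hl1 : (0 < l.+1 < n)%N by exact: hl.
  have [_ _ _ h4] := vertex_g hn hp m2' hl1 (hadm m2' hl1).
  by move=> E; apply: h4; rewrite /= E.
have hl1 : (0 < l.+1 < n)%N by exact: hl.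
have hk1 : (0 < k.+1 < m)%N by exact: hk.
have [_ h2 _ _] := vertex_g hn hp hk1 hl1 (hadm hk1 hl1).
exact: h2.
Qed.

Lemma gdiff_k k l : (k.+1 < m)%N -> (l < n)%N -> G p k l <> G p k.+1 l.
Proof.
move=> hk hl; case: (ltnP l.+1 n) => hl'.
  have hl1 : (0 < l.+1 < n)%N by exact: hl'.
  have hk1 : (0 < k.+1 < m)%N by exact: hk.
  by have [h1 _ _ _] := vertex_g hn hp hk1 hl1 (hadm hk1 hl1).
case: l hl hl' => [|l] hl hl'; first by move: (leq_trans n2 hl').
have hl1 : (0 < l.+1 < n)%N by exact: hl.
have hk1 : (0 < k.+1 < m)%N by exact: hk.
have [_ _ h3 _] := vertex_g hn hp hk1 hl1 (hadm hk1 hl1).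
by move=> E; apply: h3; rewrite /= E.
Qed.

Lemma el_plane k l : (k < m)%N -> (l.+1 < n)%N ->
  pz (el k l) = px (p k l) * px (el k l) + py (p k l) * py (el k l) /\
  pz (el k l) = px (p k l.+1) * px (el k l) + py (p k l.+1) * py (el k l).
Proof.
move=> hk hl; have [_ _ o3 o4] := hp hk (ltnW hl).
have [o1' o2' _ _] := hp hk hl.
by split; apply: on_plane_diff.
Qed.

Lemma ek_plane k l : (k.+1 < m)%N -> (l < n)%N ->
  pz (ek k l) = px (p k l) * px (ek k l) + py (p k l) * py (ek k l) /\
  pz (ek k l) = px (p k.+1 l) * px (ek k l) + py (p k.+1 l) * py (ek k l).
Proof.
move=> hk hl; have [_ o2 o3 _] := hp (ltnW hk) hl.
have [o1' _ _ o4'] := hp hk hl.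
by split; apply: on_plane_diff.
Qed.

Lemma el_nz k l : (k < m)%N -> (l.+1 < n)%N -> el k l <> pzero R.
Proof.
move=> hk hl /psub0 E; have [ncol _] := hn hk hl.
by have [h _] := ncol_neq ncol; apply: h.
Qed.

Lemma ek_nz k l : (k < m)%N -> (l < n)%N -> ek k l <> pzero R.
Proof.
move=> hk hl /psub0 E; have [ncol _] := hn hk hl.
by have [_ h] := ncol_neq ncol; apply: h.
Qed.


Section Fwd.
Variable C : nat -> nat -> pt R.
Hypothesis hrp : reciprocal_parallel m n F C.

Let Hl k l : (k < m)%N -> (l.+1 < n)%N -> parallel (psub (C k l.+1) (C k l)) (el k l).
Proof. by case: hrp => _ Hh _ hk hl; exact: (Hh k l.+1 hk hl). Qed.
Let Hk k l : (k.+1 < m)%N -> (l < n)%N -> parallel (psub (C k.+1 l) (C k l)) (ek k l).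
Proof. by case: hrp => _ _ Hv hk hl; exact: (Hv k.+1 l hk hl). Qed.

Let El k l : (k < m)%N -> (l.+1 < n)%N ->
  pz (psub (C k l.+1) (C k l)) = px (p k l) * px (psub (C k l.+1) (C k l)) + py (p k l) * py (psub (C k l.+1) (C k l)) /\
  pz (psub (C k l.+1) (C k l)) = px (p k l.+1) * px (psub (C k l.+1) (C k l)) + py (p k l.+1) * py (psub (C k l.+1) (C k l)).
Proof.
move=> hk hl; have [e1 e2] := el_plane hk hl.
by split; apply: edge_fwd (Hl hk hl) (el_nz hk hl) _.
Qed.

Let Ek k l : (k.+1 < m)%N -> (l < n)%N ->
  pz (psub (C k.+1 l) (C k l)) = px (p k l) * px (psub (C k.+1 l) (C k l)) + py (p k l) * py (psub (C k.+1 l) (C k l)) /\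
  pz (psub (C k.+1 l) (C k l)) = px (p k.+1 l) * px (psub (C k.+1 l) (C k l)) + py (p k.+1 l) * py (psub (C k.+1 l) (C k l)).
Proof.
move=> hk hl; have [e1 e2] := ek_plane hk hl.
by split; apply: edge_fwd (Hk hk hl) (ek_nz (ltnW hk) hl) _.
Qed.

Definition D1 k l := Mf (psub (C k.+1 l) (C k l)) (px (F k.+1 l.+1)) (py (F k.+1 l.+1)).
Definition D2 k l := Mf (psub (C k l.+1) (C k l)) (px (F k.+1 l.+1)) (py (F k.+1 l.+1)).
Definition c3 k l := \sum_(a < k) D1 a 0 + \sum_(b < l) D2 k b.

Lemma closure k l : (k.+1 < m)%N -> (l.+1 < n)%N -> D1 k l + D2 k.+1 l = D2 k l + D1 k l.+1.
Proof.
move=> hk hl.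
have mv1 := move_M (Hl hk hl).
have mv2 := move_M (Hk hk hl).
rewrite /D1 /D2 -mv1 -mv2 /Mf /psub /=; ring.
Qed.

Lemma c3l k l : c3 k l.+1 = c3 k l + D2 k l.
Proof. by rewrite /c3 big_ord_recr /= addrA. Qed.

Lemma c3k k l : (k.+1 < m)%N -> (l < n)%N -> c3 k.+1 l = c3 k l + D1 k l.
Proof.
move=> hk; elim: l => [|l IH] hl.
  by rewrite /c3 !big_ord0 big_ord_recr /= !addr0.
by rewrite !c3l IH ?(ltnW hl) // -addrA closure // addrA.
Qed.

Definition cc k l := Pt (py (C k l)) (- px (C k l)) (c3 k l).

Lemma fwd_chr : christoffel_dual m n p cc.
Proof.
move=> k l hk hl.
have hk0 := ltnW hk; have hl0 := ltnW hl.
have [_ _ a3 _] := hp hk0 hl0.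
have [_ _ _ b4] := hp hk hl0.
have [c1 _ _ _] := hp hk hl.
have [_ d2 _ _] := hp hk0 hl.
have [eAB1 eAB2] := Ek hk hl0.
have [eAD1 eAD2] := El hk0 hl.
have [eBC1 eBC2] := El hk hl.
have [eDC1 eDC2] := Ek hk hl.
apply: (@quad_alg _ _ _ _ _ _ _ _ _ _ _ _ _ (px (F k.+1 l.+1)) (py (F k.+1 l.+1)) (pz (F k.+1 l.+1))).
- by move: a3; rewrite /on_dual_plane => ->; ring.
- by move: b4; rewrite /on_dual_plane => ->; ring.
- by move: c1; rewrite /on_dual_plane => ->; ring.
- by move: d2; rewrite /on_dual_plane => ->; ring.
- by rewrite c3k.
- by rewrite c3l.
- rewrite c3l; congr (_ + _); rewrite /D2; apply: esym; exact: move_M (Hl hk hl).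
all: by [].
Qed.

Lemma fwd_nae : not_all_equal m n cc.
Proof.
case: (classic (not_all_equal m n cc)) => // hN; exfalso.
have eqc : forall a b a' b', (a < m)%N -> (b < n)%N -> (a' < m)%N -> (b' < n)%N ->
    cc a b = cc a' b'.
  move=> a b a' b' ha hb ha' hb'; apply: NNPP => hne; apply: hN.
  by exists a, b, a', b'.
have eqxy : forall a b a' b', cc a b = cc a' b' -> px (C a b) = px (C a' b') /\ py (C a b) = py (C a' b').
  by move=> a b a' b' [-> /eqP]; rewrite eqr_opp => /eqP ->.
have hC : forall k l, (k < m)%N -> (l < n)%N -> C k l = C 0%N 0%N.
  apply: grid_const.
    move=> k l hk hl; have [ex ey] := eqxy _ _ _ _ (eqc _ _ _ _ hk hl (ltnW hk) hl).
    have [e1 _] := Ek hk hl.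
    rewrite /psub /= ex ey !subrr !mulr0 addr0 in e1.
    move/eqP: e1; rewrite subr_eq0 => /eqP ez.
    by rewrite (pt_eta (C k.+1 l)) (pt_eta (C k l)) ex ey ez.
  move=> k l hk hl; have [ex ey] := eqxy _ _ _ _ (eqc _ _ _ _ hk hl hk (ltnW hl)).
  have [e1 _] := El hk hl.
  rewrite /psub /= ex ey !subrr !mulr0 addr0 in e1.
  move/eqP: e1; rewrite subr_eq0 => /eqP ez.
  by rewrite (pt_eta (C k l.+1)) (pt_eta (C k l)) ex ey ez.
case: hrp => [[k [l [k' [l' [hk hl hk' hl' hne]]]]] _ _].
by apply: hne; rewrite (hC _ _ hk hl) (hC _ _ hk' hl').
Qed.

Lemma fwd : exists (c : nat -> nat -> pt R) (h : nat -> nat -> R),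
    [/\ not_all_equal m n c,
        christoffel_dual m n p c,
        (forall k l, (k < m)%N -> (l < n)%N ->
           C k l = Pt (- py (c k l)) (px (c k l)) (h k l)) &
        (forall k l k' l', adjacent m n k l k' l' ->
           h k l - h k' l' =
           (px (c k l) - px (c k' l')) * py (p k l)
           - (py (c k l) - py (c k' l')) * px (p k l))].
Proof.
exists cc, (fun k l => pz (C k l)); split.
- exact: fwd_nae.
- exact: fwd_chr.
- by move=> k l _ _; rewrite /cc /= opprK; case: (C k l).
move=> k l k' l' [hk hl hk' hl' [[/eqP ek [/eqP el|/eqP el]]|[/eqP el [/eqP ek|/eqP ek]]]];
  subst; rewrite /cc /=.
- have [e1 _] := El hk hl'; move: e1; rewrite /psub /= => e1; lra.
- have [_ e2] := El hk hl; move: e2; rewrite /psub /= => e2; lra.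
- have [e1 _] := Ek hk' hl; move: e1; rewrite /psub /= => e1; lra.
- have [_ e2] := Ek hk hl; move: e2; rewrite /psub /= => e2; lra.
Qed.

End Fwd.

Section Bwd.
Variables (C c : nat -> nat -> pt R) (h : nat -> nat -> R).
Hypothesis hnae : not_all_equal m n c.
Hypothesis hchr : christoffel_dual m n p c.
Hypothesis hC : forall k l, (k < m)%N -> (l < n)%N ->
           C k l = Pt (- py (c k l)) (px (c k l)) (h k l).
Hypothesis hh : forall k l k' l', adjacent m n k l k' l' ->
           h k l - h k' l' =
           (px (c k l) - px (c k' l')) * py (p k l)
           - (py (c k l) - py (c k' l')) * px (p k l).

Let Pl k l : (k < m)%N -> (l.+1 < n)%N ->
  parallel (psub (c k l.+1) (c k l)) (psub (p k l.+1) (p k l)).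
Proof.
move=> hk hl; case: (ltnP k.+1 m) => hk'.
  have [_ _ _ hDA _] := hchr hk' hl.
  by apply: par_sym; apply: par_neg2.
case: k hk hk' => [|k] hk hk'; first by move: (leq_trans m2 hk').
have [_ hBC _ _ _] := hchr hk hl.
exact: par_sym.
Qed.

Let Pk k l : (k.+1 < m)%N -> (l < n)%N ->
  parallel (psub (c k.+1 l) (c k l)) (psub (p k.+1 l) (p k l)).
Proof.
move=> hk hl; case: (ltnP l.+1 n) => hl'.
  have [hAB _ _ _ _] := hchr hk hl'.
  exact: par_sym.
case: l hl hl' => [|l] hl hl'; first by move: (leq_trans n2 hl').
have [_ _ hCD _ _] := hchr hk hl.
by apply: par_sym; apply: par_neg2.
Qed.

Let gne (a b a' b' : nat) : G p a b <> G p a' b' ->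
  ~ (px (psub (p a' b') (p a b)) = 0 /\ py (psub (p a' b') (p a b)) = 0).
Proof.
move=> hne [hx hy]; apply: hne; rewrite /G; move: hx hy.
by rewrite /psub /= => /eqP; rewrite subr_eq0 => /eqP -> /eqP; rewrite subr_eq0 => /eqP ->.
Qed.

Lemma Cl k l : (k < m)%N -> (l.+1 < n)%N -> parallel (psub (C k l.+1) (C k l)) (el k l).
Proof.
move=> hk hl; rewrite !hC ?(ltnW hl) //.
set dc := psub (c k l.+1) (c k l).
have -> : psub (Pt (- py (c k l.+1)) (px (c k l.+1)) (h k l.+1))
    (Pt (- py (c k l)) (px (c k l)) (h k l)) = Pt (- py dc) (px dc) (h k l.+1 - h k l).
  by rewrite /dc /psub /=; congr Pt; ring.
have [e1 e2] := el_plane hk hl.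
apply: (@edge_back _ _ _ _ (px (p k l)) (py (p k l)) _ (Pl hk hl) (gne (gdiff_l hk hl))) => //.
- move: e1 e2; rewrite /psub /= => e1 e2; lra.
- have hadj : adjacent m n k l k l.+1.
    by split => //; [exact: ltnW | left; split => //; left].
  have := hh hadj; rewrite /dc /psub /= => e; lra.
Qed.

Lemma Ck k l : (k.+1 < m)%N -> (l < n)%N -> parallel (psub (C k.+1 l) (C k l)) (ek k l).
Proof.
move=> hk hl; rewrite !hC ?(ltnW hk) //.
set dc := psub (c k.+1 l) (c k l).
have -> : psub (Pt (- py (c k.+1 l)) (px (c k.+1 l)) (h k.+1 l))
    (Pt (- py (c k l)) (px (c k l)) (h k l)) = Pt (- py dc) (px dc) (h k.+1 l - h k l).
  by rewrite /dc /psub /=; congr Pt; ring.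
have [e1 e2] := ek_plane hk hl.
apply: (@edge_back _ _ _ _ (px (p k l)) (py (p k l)) _ (Pk hk hl) (gne (gdiff_k hk hl))) => //.
- move: e1 e2; rewrite /psub /= => e1 e2; lra.
- have hadj : adjacent m n k l k.+1 l.
    by split => //; [exact: ltnW | right; split => //; left].
  have := hh hadj; rewrite /dc /psub /= => e; lra.
Qed.

Lemma bwd_nae : not_all_equal m n C.
Proof.
case: (classic (not_all_equal m n C)) => // hN; exfalso.
have eqC : forall a b a' b', (a < m)%N -> (b < n)%N -> (a' < m)%N -> (b' < n)%N ->
    C a b = C a' b'.
  move=> a b a' b' ha hb ha' hb'; apply: NNPP => hne; apply: hN.
  by exists a, b, a', b'.
have eqxy : forall a b a' b', (a < m)%N -> (b < n)%N -> (a' < m)%N -> (b' < n)%N ->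
    px (psub (c a b) (c a' b')) = 0 /\ py (psub (c a b) (c a' b')) = 0.
  move=> a b a' b' ha hb ha' hb'; have := eqC _ _ _ _ ha hb ha' hb'.
  rewrite !hC // => -[/eqP]; rewrite eqr_opp => /eqP ey ex.
  by rewrite /psub /= ex ey !subrr.
have hc : forall k l, (k < m)%N -> (l < n)%N -> c k l = c 0%N 0%N.
  apply: grid_const.
    move=> k l hk hl; have [ex ey] := eqxy _ _ _ _ hk hl (ltnW hk) hl.
    have ez := par_vert (Pk hk hl) ex ey (gne (gdiff_k hk hl)).
    rewrite /psub /= in ex ey ez; apply: psub0; rewrite /psub ex ey ez; done.
  move=> k l hk hl; have [ex ey] := eqxy _ _ _ _ hk hl hk (ltnW hl).
  have ez := par_vert (Pl hk hl) ex ey (gne (gdiff_l hk hl)).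
  rewrite /psub /= in ex ey ez; apply: psub0; rewrite /psub ex ey ez; done.
case: hnae => [k [l [k' [l' [hk hl hk' hl' hne]]]]].
by apply: hne; rewrite (hc _ _ hk hl) (hc _ _ hk' hl').
Qed.

Lemma bwd : reciprocal_parallel m n F C.
Proof.
split; first exact: bwd_nae.
  move=> i [|l] // hi /andP[_ hl]; exact: Cl.
move=> [|k] // j /andP[_ hk] hj; exact: Ck.
Qed.

End Bwd.
End Main.

Theorem lemma8 (R : realFieldType) (m n : nat) (F p : nat -> nat -> pt R)
  (hF : dual_convex m n F) (hp : metric_dual m n F p)
  (C : nat -> nat -> pt R) :
  reciprocal_parallel m n F C <->
  exists (c : nat -> nat -> pt R) (h : nat -> nat -> R),
    [/\ not_all_equal m n c,
        christoffel_dual m n p c,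
        (forall k l, (k < m)%N -> (l < n)%N ->
           C k l = Pt (- py (c k l)) (px (c k l)) (h k l)) &
        (forall k l k' l', adjacent m n k l k' l' ->
           h k l - h k' l' =
           (px (c k l) - px (c k' l')) * py (p k l)
           - (py (c k l) - py (c k' l')) * px (p k l))].
Proof.
split.
  by move=> hrp; exact: (fwd hF hp hrp).
by move=> [c [h [h1 h2 h3 h4]]]; exact: (bwd hF hp h1 h2 h3 h4).
Qed.
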